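(* Let $G$ and $H$ be topological groupoids and let $\pi\colon G\to H$ be a fiberwise groupoid covering map. Then for every $u\in G^0$, the restriction $\pi|_{G^u}\colon G^u\to H^{\pi(u)}$ (respectively $\pi|_{G_u}\colon G_u\to H_{\pi(u)}$) is a regular covering map implemented by the action of the group $\pi^{-1}(\pi(u))$ on $G^u$ by left multiplication (respectively on $G_u$ by right multiplication).
   Context: A topological groupoid is a small category with all morphisms invertible and a topology making multiplication and inversion continuous; $G^0$ is the unit space, $d,r$ domain and range, $G^u=r^{-1}(u)$, $G_u=d^{-1}(u)$. A fiberwise groupoid covering $\pi\colon G\to H$ is a surjective groupoid homomorphism that restricts to a homeomorphism $G^0\to H^0$ and is a local homeomorphism. For $u\in G^0$, $\pi^{-1}(\pi(u))$ is a group under the multiplication of $G$, all of whose elements have range and domain $u$. *)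

(* Defs.v *)
From HB Require Import structures.
From mathcomp Require Import all_boot all_order.
From mathcomp Require Import all_classical topology.
Set Implicit Arguments. Unset Strict Implicit. Unset Printing Implicit Defensive.
Local Open Scope classical_set_scope.

Definition open_in (T : topologicalType) (A U : set T) : Prop :=
  exists O : set T, open O /\ U = A `&` O.

Definition cont_in (T S : topologicalType) (A : set T) (B : set S) (f : T -> S) : Prop :=
  (forall x, A x -> B (f x)) /\
  (forall V, open_in B V -> open_in A (A `&` f @^-1` V)).

Definition homeo_in (T S : topologicalType) (A : set T) (B : set S) (f : T -> S) : Prop :=
  cont_in A B f /\
  exists g : S -> T, cont_in B A g /\
    (forall x, A x -> g (f x) = x) /\ (forall y, B y -> f (g y) = y).

Definition local_homeo (T S : topologicalType) (f : T -> S) : Prop :=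
  forall x, exists U : set T, [/\ open U, U x, open (f @` U) & homeo_in U (f @` U) f].

Definition covering_in (T S : topologicalType) (X : set T) (Y : set S) (p : T -> S) : Prop :=
  p @` X = Y /\
  forall y, Y y -> exists V : set S, [/\ open_in Y V, V y &
    exists (I : Type) (W : I -> set T),
      [/\ forall i, open_in X (W i),
          forall i j, i <> j -> W i `&` W j = set0,
          X `&` p @^-1` V = \bigcup_i W i &
          forall i, homeo_in (W i) V p]].

(* Composition convention: g h is defined iff gd g = gr h; then
   gd (g h) = gd h and gr (g h) = gr g. *)
Record groupoid (T : Type) := Groupoid {
  gd : T -> T;
  gr : T -> T;
  gmul : T -> T -> T;
  ginv : T -> T;
  gr_gd : forall g, gr (gd g) = gd g;
  gd_gr : forall g, gd (gr g) = gr g;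
  gd_mul : forall g h, gd g = gr h -> gd (gmul g h) = gd h;
  gr_mul : forall g h, gd g = gr h -> gr (gmul g h) = gr g;
  gmulA : forall g h k, gd g = gr h -> gd h = gr k ->
    gmul g (gmul h k) = gmul (gmul g h) k;
  gmul_gd : forall g, gmul g (gd g) = g;
  gmul_gr : forall g, gmul (gr g) g = g;
  gd_inv : forall g, gd (ginv g) = gr g;
  gr_inv : forall g, gr (ginv g) = gd g;
  gmulV : forall g, gmul g (ginv g) = gr g;
  gmulVg : forall g, gmul (ginv g) g = gd g
}.

Definition unit_space T (G : groupoid T) : set T := range (gd G).
Definition composable T (G : groupoid T) : set (T * T) :=
  [set gh | gd G gh.1 = gr G gh.2].

Definition topological_groupoid (T : topologicalType) (G : groupoid T) : Prop :=
  cont_in (composable G) setT (fun gh : T * T => gmul G gh.1 gh.2) /\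
  continuous (ginv G).

Definition groupoid_hom T S (G : groupoid T) (H : groupoid S) (pi : T -> S) : Prop :=
  forall g h, gd G g = gr G h ->
    gd H (pi g) = gr H (pi h) /\ pi (gmul G g h) = gmul H (pi g) (pi h).

Definition fiberwise_covering (T S : topologicalType) (G : groupoid T) (H : groupoid S)
    (pi : T -> S) : Prop :=
  [/\ groupoid_hom G H pi, (forall y, exists x, pi x = y),
      homeo_in (unit_space G) (unit_space H) pi & local_homeo pi].

(* Main.v *)
Require Import Defs.
From mathcomp Require Import all_boot all_order.
From mathcomp Require Import all_classical topology.
Local Open Scope classical_set_scope.

Section Topo.
Variables T S R : topologicalType.

Lemma open_in_self (A : set T) (O : set T) : open O -> open_in A (A `&` O).
Proof. by move=> oO; exists O. Qed.

Lemma cont_sub (A : set T) (B : set S) (f : T -> S) :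
  cont_in A setT f -> (forall x, A x -> B (f x)) -> cont_in A B f.
Proof.
move=> [_ hc] hAB; split => // V [O [oO ->]].
have [O1 [oO1 e1]] := hc (setT `&` O) (ex_intro _ O (conj oO erefl)).
exists O1; split => //; rewrite -e1; apply/seteqP; split => x /=.
  by move=> [Ax [_ Ox]]; split => //; split.
by move=> [Ax [_ Ox]]; split => //; split => //; exact: hAB.
Qed.

Lemma cont_restrict (A A' : set T) (B B' : set S) (f : T -> S) :
  cont_in A B f -> A' `<=` A -> (forall x, A' x -> B' (f x)) -> cont_in A' B' f.
Proof.
move=> [hAB hc] sA hA'; split => // V [O [oO ->]].
have [O1 [oO1 e1]] := hc (B `&` O) (ex_intro _ O (conj oO erefl)).
exists O1; split => //; apply/seteqP; split => x /=.
  move=> [A'x [_ Ox]]; split => //.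
  have : (A `&` f @^-1` (B `&` O)) x by split; [exact: sA|split => //; exact: hAB (sA _ A'x)].
  by rewrite e1 => -[].
move=> [A'x O1x]; split => //.
have : (A `&` O1) x by split => //; exact: sA.
by rewrite -e1 => -[_ [_ Ox]]; split => //; exact: hA'.
Qed.

Lemma cont_comp (A : set T) (B : set S) (C : set R) f h :
  cont_in A B f -> cont_in B C h -> cont_in A C (h \o f).
Proof.
move=> [fAB fc] [hBC hc]; split => [x Ax|V oV]; first exact/hBC/fAB.
have [O1 [oO1 e1]] := fc _ (hc V oV).
exists O1; split => //; rewrite -e1; apply/seteqP; split => x /=.
  by move=> [Ax Vx]; split => //; split => //; exact: fAB.
by move=> [Ax [_ Vx]].
Qed.

Lemma cont_ext (A : set T) (B : set S) f f' :
  cont_in A B f -> (forall x, A x -> f x = f' x) -> cont_in A B f'.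
Proof.
move=> [fAB fc] e; split => [x Ax|V oV]; first by rewrite -e //; exact: fAB.
have -> : A `&` f' @^-1` V = A `&` f @^-1` V.
  by apply/seteqP; split => x /= [Ax Vx]; split => //; rewrite ?e // -?e.
exact: fc.
Qed.

Lemma homeo_ext (A : set T) (B : set S) f f' :
  homeo_in A B f -> (forall x, A x -> f x = f' x) -> homeo_in A B f'.
Proof.
move=> [cf [g [cg [gf fg]]]] e; split; first exact: cont_ext cf e.
exists g; split => //; split => [x Ax|y By]; first by rewrite -e // gf.
rewrite -e ?fg //; by case: cg => + _; apply.
Qed.

Lemma cont_pairing (C : set (T * T)) (m : T * T -> T) (A : set T) (f : T -> T * T) :
  cont_in C setT m -> continuous f -> (forall x, A x -> C (f x)) ->
  cont_in A setT (m \o f).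
Proof.
move=> [_ hc] cf hAC; split => // V [O [oO ->]].
have [O1 [oO1 e1]] := hc (setT `&` O) (ex_intro _ O (conj oO erefl)).
exists (f @^-1` O1); split.
  by apply: open_comp => // x _; exact: cf.
apply/seteqP; split => x /=.
  move=> [Ax [_ Ox]]; split => //.
  have : (C `&` m @^-1` (setT `&` O)) (f x) by split; [exact: hAC|].
  by rewrite e1 => -[].
move=> [Ax O1x]; split => //.
have : (C `&` O1) (f x) by split => //; exact: hAC.
by rewrite -e1 => -[_ [_ Ox]].
Qed.

End Topo.

Lemma homeo_restrict (T S : topologicalType) (A A' : set T) (B B' : set S) f :
  homeo_in A B f -> A' `<=` A -> B' `<=` B ->
  (forall x, A' x -> B' (f x)) -> (forall y, B' y -> exists x, A' x /\ f x = y) ->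
  homeo_in A' B' f.
Proof.
move=> [cf [g [cg [gf fg]]]] sA sB hm hon.
split; first exact: cont_restrict cf sA hm.
exists g; split.
  apply: cont_restrict cg sB _ => y /hon [x [A'x <-]]; rewrite gf //; exact: sA.
split => [x A'x|y B'y]; [exact/gf/sA|exact/fg/sB].
Qed.


Lemma homeo_comp (T S R : topologicalType) (A : set T) (B : set S) (C : set R) f h :
  homeo_in A B f -> homeo_in B C h -> homeo_in A C (h \o f).
Proof.
move=> [cf [g [cg [gf fg]]]] [ch [k [ck [kh hk]]]].
split; first exact: cont_comp cf ch.
exists (g \o k); split; first exact: cont_comp ck cg.
split => [x Ax|y Cy] /=.
  by rewrite kh ?gf //; case: cf => + _; apply.
by rewrite fg ?hk //; case: ck => + _; apply.
Qed.


Section Gpd.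
Variables (T : Type) (G : groupoid T).

Lemma unitE e : unit_space G e <-> exists x, gd G x = e.
Proof. by split => [[x _ <-]|[x <-]]; exists x. Qed.

Lemma unit_gd x : unit_space G (gd G x).
Proof. by exists x. Qed.

Lemma unit_gr x : unit_space G (gr G x).
Proof. by exists (gr G x) => //; rewrite gd_gr. Qed.

Lemma gdgd x : gd G (gd G x) = gd G x.
Proof. by rewrite -{1}(gr_gd G x) gd_gr gr_gd. Qed.

Lemma unit_fix e : unit_space G e -> gd G e = e /\ gr G e = e.
Proof. by move=> [x _ <-]; rewrite gdgd gr_gd. Qed.

Lemma cancel_l k a : gr G a = gd G k -> gmul G (ginv G k) (gmul G k a) = a.
Proof.
move=> h; rewrite gmulA ?gd_inv // ?h // gmulVg -h gmul_gr //.
Qed.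

Lemma cancel_l' k g : gr G k = gr G g -> gmul G k (gmul G (ginv G k) g) = g.
Proof.
move=> h; rewrite gmulA ?gr_inv ?gd_inv // gmulV h gmul_gr //.
Qed.

Lemma cancel_r k a : gd G k = gr G a -> gmul G (gmul G k a) (ginv G a) = k.
Proof.
move=> h; rewrite -gmulA ?gr_inv // gmulV -h gmul_gd //.
Qed.

Lemma idem_unit a : gd G a = gr G a -> gmul G a a = a -> gd G a = a.
Proof.
move=> h e.
have e1 : gmul G (ginv G a) (gmul G a a) = gd G a by rewrite e gmulVg.
by rewrite -e1 gmulA ?gd_inv // gmulVg h gmul_gr.
Qed.

End Gpd.

Set Implicit Arguments. Unset Strict Implicit.
Section Left.
Variables (T S : topologicalType) (G : groupoid T) (H : groupoid S) (pi : T -> S).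
Hypothesis hom : groupoid_hom G H pi.
Hypothesis surj : forall y, exists x, pi x = y.
Hypothesis injU : forall x y, unit_space G x -> unit_space G y -> pi x = pi y -> x = y.
Hypothesis lh : local_homeo pi.
Hypothesis hL : forall k, cont_in [set g | gr G g = gd G k] setT (gmul G k).
Variable u : T.
Hypothesis uU : unit_space G u.

Lemma pi_unit e : unit_space G e -> gd H (pi e) = pi e.
Proof.
move=> /(@unit_fix _ G) [hd hr].
have [h1 h2] := hom (etrans hd (esym hr)).
apply: (@idem_unit _ H) => //.
by rewrite -h2 -{2}hd gmul_gd.
Qed.

Lemma pi_unit_gr e : unit_space G e -> gr H (pi e) = pi e.
Proof. by move=> ue; rewrite -(pi_unit ue) gr_gd. Qed.

Lemma pi_gd x : pi (gd G x) = gd H (pi x).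
Proof.
have [e _] := hom (esym (gr_gd G x)).
by rewrite e pi_unit_gr //; exact: unit_gd.
Qed.

Lemma pi_gr x : pi (gr G x) = gr H (pi x).
Proof.
have [e _] := hom (gd_gr G x).
by rewrite -e pi_unit //; exact: unit_gr.
Qed.


Let K := pi @^-1` [set pi u].
Let X := [set g | gr G g = u].

Lemma K_gd k : K k -> gd G k = u.
Proof.
move=> hk; apply: injU; [exact: unit_gd|exact: uU|].
by rewrite pi_gd hk pi_unit.
Qed.

Lemma K_gr k : K k -> gr G k = u.
Proof.
move=> hk; apply: injU; [exact: unit_gr|exact: uU|].
by rewrite pi_gr hk pi_unit_gr.
Qed.

Lemma gr_eq x : gr H (pi x) = pi u -> gr G x = u.
Proof.
move=> h; apply: injU; [exact: unit_gr|exact: uU|].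
by rewrite pi_gr.
Qed.

Lemma K_act k g : K k -> gr G g = u -> pi (gmul G k g) = pi g.
Proof.
move=> hk hg.
have [_ ->] := hom (etrans (K_gd hk) (esym hg)).
by rewrite hk -hg pi_gr gmul_gr.
Qed.

Lemma K_inv k : K k -> K (ginv G k).
Proof.
move=> hk.
have e1 : gd G (ginv G k) = u by rewrite gd_inv (K_gr hk).
have [_ e2] := hom (gd_inv G k).
rewrite /K /=.
transitivity (gmul H (pi (ginv G k)) (gd H (pi (ginv G k)))); first by rewrite gmul_gd.
by rewrite -pi_gd e1 -{1}hk -e2 gmulVg (K_gd hk).
Qed.

Lemma lmul_cont k : gd G k = u -> gr G k = u -> cont_in X X (gmul G k).
Proof.
move=> hd hr; apply: cont_sub.
  by have := hL k; rewrite hd.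
by move=> g hg; rewrite /X /= gr_mul // hd hg.
Qed.

Lemma lmul_homeo k : gd G k = u -> gr G k = u -> homeo_in X X (gmul G k).
Proof.
move=> hd hr; split; first exact: lmul_cont.
exists (gmul G (ginv G k)); split.
  by apply: lmul_cont; rewrite ?gd_inv ?gr_inv.
split => [g hg|g hg]; first by rewrite cancel_l // hd.
by rewrite cancel_l' // hr.
Qed.

Lemma item4 k g : K k -> gr G g = u -> gmul G k g = g -> k = u.
Proof.
move=> hk hg e.
by rewrite -(@cancel_r _ G k g (etrans (K_gd hk) (esym hg))) e gmulV.
Qed.

Lemma item5 g g' : gr G g = u -> gr G g' = u -> pi g = pi g' ->
  exists2 k, K k & g' = gmul G k g.
Proof.
move=> hg hg' e.
have dd : gd G g' = gd G g.
  by apply: injU; [exact: unit_gd|exact: unit_gd|rewrite !pi_gd e].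
exists (gmul G g' (ginv G g)).
  rewrite /K /=.
  have [_ ->] := hom (etrans dd (esym (gr_inv G g))).
  rewrite -e.
  have [_ <-] := hom (esym (gr_inv G g)).
  by rewrite gmulV hg.
by rewrite -gmulA ?gr_inv ?gd_inv // gmulVg -dd gmul_gd.
Qed.


Lemma cover_left : covering_in X [set h | gr H h = pi u] pi.
Proof.
split.
  apply/seteqP; split => [_ [g Xg <-]|y /= hy] /=.
    by rewrite -pi_gr Xg.
  have [x px] := surj y.
  by exists x => //; apply: gr_eq; rewrite px.
move=> y hy.
have [x px] := surj y.
have Xx : gr G x = u by apply: gr_eq; rewrite px.
have [U [oU Ux opU hU]] := lh x.
pose V := [set h | gr H h = pi u] `&` (pi @` U).
exists V; split.
- by exists (pi @` U).
- by split => //; rewrite -px; exists x.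
pose W := fun i : {k | K k} => [set g | gr G g = u /\ U (gmul G (ginv G (proj1_sig i)) g)].
exists {k | K k}, W; split.
- move=> [k hk] /=.
  have hki := K_inv hk.
  have [_ c'] := lmul_cont (K_gd hki) (K_gr hki).
  have := c' (X `&` U) (@open_in_self _ X U oU).
  suff -> : W (exist _ k hk) = X `&` gmul G (ginv G k) @^-1` (X `&` U) by [].
  apply/seteqP; split => g /=.
    move=> [Xg Ug]; split => //; split => //.
    by rewrite /X /= gr_mul ?gr_inv ?(K_gd hk) // gd_inv (K_gr hk) Xg.
  by move=> [Xg [_ Ug]].
- move=> [k hk] [k' hk'] neq; apply/seteqP; split => // g [] /= [Xg Ua] [_ Ub].
  exfalso; apply: neq.
  have hki := K_inv hk; have hki' := K_inv hk'.
  have pa := K_act hki Xg; have pb := K_act hki' Xg.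
  have [_ [sig [_ [sg _]]]] := hU.
  have eab : gmul G (ginv G k) g = gmul G (ginv G k') g.
    by rewrite -(sg _ Ua) -(sg _ Ub) pa pb.
  have ek : forall k0, K k0 -> k0 = gmul G g (ginv G (gmul G (ginv G k0) g)).
    move=> k0 hk0.
    have h0 : gd G k0 = gr G (gmul G (ginv G k0) g).
      by rewrite gr_mul ?gr_inv // gd_inv (K_gr hk0) Xg.
    have := @cancel_r _ G k0 _ h0.
    by rewrite cancel_l' ?(K_gr hk0) // => ->.
  have ekk : k = k' by rewrite (ek _ hk) (ek _ hk') eab.
  subst k'; congr exist; exact: Prop_irrelevance.
- apply/seteqP; split.
    move=> g [Xg [hg [a Ua pa]]].
    have Xa : gr G a = u by apply: gr_eq; rewrite pa.
    have [k hk e] := item5 Xa Xg pa.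
    exists (exist _ k hk) => //=; split => //.
    by rewrite e cancel_l // Xa (K_gd hk).
  move=> g [[k hk] _ [Xg Ua]] /=; split => //; split; first by rewrite /= -pi_gr Xg.
  exists (gmul G (ginv G k) g) => //.
  exact: K_act (K_inv hk) Xg.
- move=> [k hk] /=.
  have hki := K_inv hk.
  pose A' := X `&` U.
  have h1 : homeo_in (W (exist _ k hk)) A' (gmul G (ginv G k)).
    apply: homeo_restrict (lmul_homeo (K_gd hki) (K_gr hki)) _ _ _ _.
    - by move=> g [].
    - by move=> g [].
    - move=> g [Xg Ug]; split => //.
      by rewrite /X /= gr_mul ?gr_inv ?(K_gd hk) // gd_inv (K_gr hk) Xg.
    - move=> a [Xa Ua]; exists (gmul G k a); split.
        split; first by rewrite gr_mul ?(K_gr hk) // (K_gd hk) Xa.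
        by rewrite /= cancel_l // Xa (K_gd hk).
      by rewrite cancel_l // Xa (K_gd hk).
  have h2 : homeo_in A' V pi.
    apply: homeo_restrict hU _ _ _ _.
    - by move=> g [].
    - by move=> y' [].
    - move=> a [Xa Ua]; split; last by exists a.
      by rewrite /= -pi_gr Xa.
    - move=> y' [hy' [a Ua pa]]; exists a; split => //; split => //.
      by apply: gr_eq; rewrite pa.
  have h3 := @homeo_comp _ _ _ _ _ _ _ _ h1 h2.
  apply: (@homeo_ext _ _ _ _ _ _ h3).
  move=> g [Xg _] /=; exact: K_act hki Xg.
Qed.


Lemma left_all :
  let K := pi @^-1` [set pi u] in
  [/\ covering_in [set g | gr G g = u] [set h | gr H h = pi u] pi,
      (forall k, K k -> forall g, gr G g = u ->
         gd G k = gr G g /\ pi (gmul G k g) = pi g),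
      (forall k, K k ->
         homeo_in [set g | gr G g = u] [set g | gr G g = u] (gmul G k)),
      (forall k g, K k -> gr G g = u -> gmul G k g = g -> k = u) &
      (forall g g', gr G g = u -> gr G g' = u -> pi g = pi g' ->
         exists2 k, K k & g' = gmul G k g)].
Proof.
split.
- exact: cover_left.
- move=> k hk g hg; split; first by rewrite (K_gd hk) hg.
  exact: K_act.
- move=> k hk; exact: lmul_homeo (K_gd hk) (K_gr hk).
- exact: item4.
- exact: item5.
Qed.

End Left.

Definition opg (T : Type) (G : groupoid T) : groupoid T.
Proof.
refine (@Groupoid T (gr G) (gd G) (fun g h => gmul G h g) (ginv G) _ _ _ _ _ _ _ _ _ _ _).
- exact: gd_gr.
- exact: gr_gd.
- by move=> g h e; rewrite gr_mul.
- by move=> g h e; rewrite gd_mul.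
- by move=> g h k e1 e2; rewrite gmulA.
- exact: gmul_gr.
- exact: gmul_gd.
- exact: gr_inv.
- exact: gd_inv.
- exact: gmulVg.
- exact: gmulV.
Defined.

Unset Implicit Arguments. Set Strict Implicit.

Theorem lemma9p3 (T S : topologicalType) (G : groupoid T) (H : groupoid S) (pi : T -> S) :
  topological_groupoid G -> topological_groupoid H -> fiberwise_covering G H pi ->
  forall u, unit_space G u ->
  let K := pi @^-1` [set pi u] in
  (* range fibers G^u, left multiplication *)
  [/\ covering_in [set g | gr G g = u] [set h | gr H h = pi u] pi,
      (forall k, K k -> forall g, gr G g = u ->
         gd G k = gr G g /\ pi (gmul G k g) = pi g),
      (forall k, K k ->
         homeo_in [set g | gr G g = u] [set g | gr G g = u] (gmul G k)),
      (forall k g, K k -> gr G g = u -> gmul G k g = g -> k = u) &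
      (forall g g', gr G g = u -> gr G g' = u -> pi g = pi g' ->
         exists2 k, K k & g' = gmul G k g)]
  /\
  (* domain fibers G_u, right multiplication *)
  [/\ covering_in [set g | gd G g = u] [set h | gd H h = pi u] pi,
      (forall k, K k -> forall g, gd G g = u ->
         gd G g = gr G k /\ pi (gmul G g k) = pi g),
      (forall k, K k ->
         homeo_in [set g | gd G g = u] [set g | gd G g = u] (fun g => gmul G g k)),
      (forall k g, K k -> gd G g = u -> gmul G g k = g -> k = u) &
      (forall g g', gd G g = u -> gd G g' = u -> pi g = pi g' ->
         exists2 k, K k & g' = gmul G g k)].
Proof.
move=> [hm _] _ [hom surj hUn lh] u uU K.
have injU : forall x y, unit_space G x -> unit_space G y -> pi x = pi y -> x = y.
  case: hUn => _ [g0 [_ [g0pi _]]] x y ux uy e.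
  by rewrite -(g0pi x ux) -(g0pi y uy) e.
have hL : forall k, cont_in [set g | gr G g = gd G k] setT (gmul G k).
  move=> k.
  have cf : continuous (fun g : T => (k, g)).
    by move=> x; apply: cvg_pair; [exact: cvg_cst|exact: cvg_id].
  exact: (@cont_pairing _ _ _ [set g | gr G g = gd G k] _ hm cf (fun x hx => esym hx)).
have hLop : forall k, cont_in [set g | gd G g = gr G k] setT (fun g => gmul G g k).
  move=> k.
  have cf : continuous (fun g : T => (g, k)).
    by move=> x; apply: cvg_pair; [exact: cvg_id|exact: cvg_cst].
  exact: (@cont_pairing _ _ _ [set g | gd G g = gr G k] _ hm cf (fun x hx => hx)).
split; first exact: (left_all hom surj injU lh hL uU).
have homop : groupoid_hom (opg G) (opg H) pi.
  move=> g h /= e; have [e1 e2] := hom h g (esym e).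
  by split; [rewrite e1|].
have unitop : forall x, unit_space (opg G) x -> unit_space G x.
  move=> x [y _ <-] /=; exact: unit_gr.
have injUop : forall x y, unit_space (opg G) x -> unit_space (opg G) y -> pi x = pi y -> x = y.
  by move=> x y /unitop ux /unitop uy; apply: injU.
have uUop : unit_space (opg G) u.
  case: uU => y _ <-; exists (gd G y) => //=; exact: gr_gd.
have [c2 i2 i3 i4 i5] := left_all homop surj injUop lh hLop uUop.
split => //.
move=> k hk g hg; have [e1 e2] := i2 k hk g hg; split => //.
Qed.
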